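(* Let $m\ge2$, $n\ge1$ be integers. Let $\mathcal{A}\in\mathbb{SF}_{m,n}$ have no zero blocks, and let $\mathcal{P}=([n],\mathbb{E})$ be the $m$-uniform multi-hypergraph whose $(0,1)$ associated tensor is $\mathcal{A}$. Then the following are equivalent: (1) $\mathcal{A}$ is $\{0,1\}$-cp; (2) $\mathcal{P}$ is a union of complete blocks on a partition of the vertex set: there exist pairwise disjoint nonempty sets $V_1,\dots,V_q$ with $V_1\cup\dots\cup V_q=[n]$ (so $n_1+\dots+n_q=n$ where $n_i=|V_i|$) such that $\mathbb{E}$ is exactly the set of all multisets of size $m$ whose elements all lie in a single $V_i$ for some $i$; (3) there exist $q\ge1$ and vectors $\mathbf{u}_1,\dots,\mathbf{u}_q\in\{0,1\}^n$ with $\mathcal{A}=\sum_{j=1}^q\mathbf{u}_j^m$ such that the $n\times q$ matrix $U=[\mathbf{u}_1,\dots,\mathbf{u}_q]$ satisfies $U^{T}U=\mathrm{diag}(n_1,\dots,n_q)$ for positive integers $n_1,\dots,n_q$ with $n_1+\dots+n_q=n$.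
   Context: $S(m,n)=\{(i_1,\dots,i_m): i_k\in[n]\}$. $\mathbb{SF}_{m,n}$ is the set of symmetric $m$th order $n$-dimensional real tensors with all entries in $\{0,1\}$. For a nonempty $I\subseteq[n]$, the principal subtensor of $\mathcal{A}$ determined by $I$ is the tensor $(a_{i_1\cdots i_m})$ with all $i_k\in I$; a zero block is a principal subtensor all of whose entries are $0$. For $\mathbf{u}\in\mathbb{R}^n$, $\mathbf{u}^m$ is the tensor with entries $u_{i_1}\cdots u_{i_m}$. A symmetric tensor $\mathcal{A}$ is $\{0,1\}$-cp if $\mathcal{A}=\sum_{j=1}^q\mathbf{u}_j^m$ for some $q\ge1$ and $\mathbf{u}_j\in\{0,1\}^n$. An $m$-uniform multi-hypergraph on $[n]$ is a pair $([n],\mathbb{E})$ with $\mathbb{E}$ a set of multisets of elements of $[n]$, each of cardinality $m$ counting repetitions. Its $(0,1)$ associated tensor is the tensor $\mathcal{A}\in\mathbb{SF}_{m,n}$ with $a_{i_1\cdots i_m}=1$ if the multiset $\{i_1,\dots,i_m\}\in\mathbb{E}$ and $0$ otherwise. *)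

(* Defs.v *)
From HB Require Import structures.
From mathcomp Require Import all_boot all_order all_algebra all_fingroup.
Set Implicit Arguments. Unset Strict Implicit. Unset Printing Implicit Defensive.

Definition idx (m n : nat) := {ffun 'I_m -> 'I_n}.

(** Real m-th order n-dimensional tensors with 0/1 (hence natural-number)
    entries; entries are stored in nat. *)
Definition tensor (m n : nat) := idx m n -> nat.

Definition symmetric_tensor m n (A : tensor m n) : Prop :=
  forall (s : 'S_m) (i : idx m n), A [ffun k => i (s k)] = A i.

Definition in_SF m n (A : tensor m n) : Prop :=
  symmetric_tensor A /\ forall i, A i = 0 \/ A i = 1.

Definition has_zero_block m n (A : tensor m n) : Prop :=
  exists I : {set 'I_n}, I != set0 /\
    forall i : idx m n, (forall k, i k \in I) -> A i = 0.

Definition tpow (m : nat) {n : nat} (u : 'I_n -> nat) : tensor m n :=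
  fun i => \prod_(k < m) u (i k).
Arguments tpow m {n} u i.

Definition is01cp m n (A : tensor m n) : Prop :=
  exists q : nat, 0 < q /\
    exists u : 'I_q -> 'I_n -> nat,
      (forall j x, u j x = 0 \/ u j x = 1) /\
      forall i, A i = \sum_(j < q) tpow m (u j) i.

(** Multisets over [n] are represented by multiplicity functions. *)
Definition mset (n : nat) := {ffun 'I_n -> nat}.

Definition mcard n (M : mset n) : nat := \sum_(x < n) M x.

Definition mset_of m n (i : idx m n) : mset n :=
  [ffun x => #|[set k | i k == x]|].

Definition is_assoc_tensor m n (E : pred (mset n)) (A : tensor m n) : Prop :=
  (forall M, E M -> mcard M = m) /\
  forall i : idx m n, A i = (if E (mset_of i) then 1 else 0).

Definition colmx n q (u : 'I_q -> 'I_n -> nat) : 'M[nat]_(n, q) :=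
  (\matrix_(x < n, j < q) u j x)%R.

Definition diagn q (nn : 'I_q -> nat) : 'M[nat]_q :=
  diag_mx (\row_(j < q) nn j)%R.

(* Main.v *)
Require Import Defs.
From HB Require Import structures.
From mathcomp Require Import all_boot all_order all_algebra all_fingroup.

Lemma sumb_le1 q (F : 'I_q -> bool) a b :
  \sum_j F j <= 1 -> F a -> F b -> a = b.
Proof.
move=> H Fa Fb; apply/eqP; apply/negPn/negP => nab.
have hb : b != a by rewrite eq_sym.
move: H; rewrite (bigD1 a) // (bigD1 b hb) /=.
by rewrite Fa Fb.
Qed.

Lemma sumb_uniq q (F : 'I_q -> bool) :
  (forall a b, F a -> F b -> a = b) -> \sum_j F j = [exists j, F j].
Proof.
move=> U; case: existsP => [[a Fa]|N].
  rewrite (bigD1 a) //= Fa big1 // => j ne.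
  by case Fj: (F j) => //; move: (U _ _ Fa Fj) => e; rewrite e eqxx in ne.
by rewrite big1 // => j _; case Fj: (F j) => //; case: N; exists j.
Qed.

Lemma tpow01 m n (u : 'I_n -> nat) (i : idx m n) :
  (forall x, u x = 0 \/ u x = 1) -> tpow m u i = [forall k, u (i k) == 1].
Proof.
move=> H; rewrite /tpow; case: forallP => [A|N].
  by rewrite big1 // => k _; apply/eqP/A.
have [k Hk] : exists k, u (i k) != 1.
  by apply/existsP; rewrite -negb_forall; apply/negP => /forallP.
rewrite (bigD1 k) //=; case: (H (i k)) => e; first by rewrite e.
by rewrite e eqxx in Hk.
Qed.

Lemma card_sum (T : finType) (P : pred T) : #|[set x | P x]| = \sum_(x : T) P x.
Proof.
rewrite -sum1_card big_mkcond /=; apply: eq_bigr => x _; rewrite inE.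
by case: (P x).
Qed.

Lemma mcard_mset_of m n (i : idx m n) : mcard (mset_of i) = m.
Proof.
rewrite /mcard.
rewrite (eq_bigr (fun x => \sum_(k < m) (i k == x))); last first.
  by move=> x _; rewrite ffunE card_sum.
rewrite exchange_big /= -[m in RHS]card_ord -sum1_card.
apply: eq_bigr => k _; rewrite (bigD1 (i k)) //= eqxx big1 // => x /negPf.
by rewrite eq_sym => ->.
Qed.

Lemma mset_of_pos m n (i : idx m n) x : 0 < mset_of i x <-> exists k, i k = x.
Proof.
rewrite ffunE card_gt0; split.
  by case/set0Pn => k; rewrite inE => /eqP; exists k.
by case=> k e; apply/set0Pn; exists k; rewrite inE e.
Qed.

Lemma count_sum T (a : pred T) s : count a s = \sum_(y <- s) a y.
Proof. by elim: s => [|y s IH]; rewrite ?big_nil ?big_cons //= IH. Qed.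

Lemma mset_surj m n (M : mset n) : 0 < n -> mcard M = m ->
  exists i : idx m n, mset_of i = M.
Proof.
move=> hn hM.
pose s := flatten [seq nseq (M y) y | y <- enum 'I_n].
have cnt : forall a : pred 'I_n, count a s = \sum_y a y * M y.
  move=> a; rewrite /s count_flatten -map_comp sumnE big_map big_enum /=.
  by apply: eq_bigr => y _; rewrite count_nseq.
have hs : size s == m.
  rewrite -count_predT cnt -hM /mcard; apply/eqP; apply: eq_bigr => y _.
  by rewrite mul1n.
pose t : m.-tuple 'I_n := Tuple hs.
exists [ffun k => tnth t k]; apply/ffunP => x.
rewrite ffunE card_sum.
have : count (pred1 x) t = M x.
  rewrite cnt (bigD1 x) //= eqxx mul1n big1 ?addn0 // => y /negPf.
  by rewrite /= => ->.
rewrite count_sum big_tuple => <-; apply: eq_bigr => k _.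
by rewrite ffunE.
Qed.

Lemma step12 (m n : nat) (hm : 2 <= m) (hn : 1 <= n)
  (A : tensor m n) (hA : in_SF A) (hnz : ~ has_zero_block A)
  (E : pred (mset n)) (hE : is_assoc_tensor E A) :
  is01cp A ->
   exists P : {set {set 'I_n}}, partition P [set: 'I_n] /\
     forall M : mset n,
       E M <-> (mcard M = m /\
                exists2 V, V \in P & forall x, 0 < M x -> x \in V).
Proof.
case=> q [q0 [u [u01 Au]]].
have k0 : 'I_m := Ordinal (leq_trans (isT : 0 < 2) hm).
pose S := fun j => [set x | u j x == 1].
have Ai : forall i, A i = \sum_j [forall k, i k \in S j].
  move=> i; rewrite Au; apply: eq_bigr => j _; rewrite tpow01 //.
  by congr nat_of_bool; apply: eq_forallb => k; rewrite inE.
have A01 : forall i, A i <= 1 by move=> i; case: (hA.2 i) => ->.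
have diag : forall x, exists j, x \in S j.
  move=> x; case: (boolP [exists j, x \in S j]) => [/existsP//|N].
  exfalso; apply: hnz; exists [set x]; split; first by apply/set0Pn; exists x; rewrite inE.
  move=> i Hi; rewrite Ai big1 // => j _.
  suff: ~~ [forall k, i k \in S j] by case: [forall _, _].
  rewrite negb_forall.
  apply/existsP; exists k0; move: (Hi k0); rewrite inE => /eqP ->.
  by apply/negP => Hx; move: N; rewrite negb_exists => /forallP/(_ j); rewrite Hx.
have uniqj : forall (i : idx m n) a b, (forall k, i k \in S a) ->
    (forall k, i k \in S b) -> a = b.
  move=> i a b Ha Hb.
  apply: (@sumb_le1 q (fun j => [forall k, i k \in S j])); first by rewrite -Ai.
    by apply/forallP.
  by apply/forallP.
exists (S @: [set j | S j != set0]); split.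
  apply/and3P; split.
  - apply/eqP/setP => x; rewrite inE; apply/bigcupP; have [j Hj] := diag x.
    exists (S j) => //; apply/imsetP; exists j => //; rewrite inE; apply/set0Pn.
    by exists x.
  - apply/trivIsetP => B C /imsetP[a _ ->] /imsetP[b _ ->] neq.
    rewrite -setI_eq0; apply/eqP/setP => x; rewrite in_setI in_set0.
    apply/negP => /andP[xa xb]; move: neq.
    by rewrite (uniqj [ffun _ => x] a b) ?eqxx // => k; rewrite ffunE.
  - apply/imsetP => [[j]]; rewrite inE => ne e; by rewrite -e eqxx in ne.
move=> M; split.
  move=> EM; have mc := hE.1 M EM; split => //.
  have [i iM] := @mset_surj m n M hn mc.
  have Ai1 : A i = 1 by rewrite hE.2 iM EM.
  have : [exists j, [forall k, i k \in S j]].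
    move: Ai1; rewrite Ai sumb_uniq.
      by case: [exists _, _].
    by move=> a b /forallP Ha /forallP Hb; apply: (uniqj i).
  case/existsP => j /forallP Hj; exists (S j).
    apply/imsetP; exists j => //; rewrite inE; apply/set0Pn; exists (i k0).
    exact: Hj.
  by move=> x; rewrite -iM => /mset_of_pos [k <-].
case=> mc [V VP HV]; have [i iM] := @mset_surj m n M hn mc.
case/imsetP: VP => j _ eV.
have Hj : forall k, i k \in S j.
  by move=> k; rewrite -eV; apply: HV; rewrite -iM; apply/mset_of_pos; exists k.
have Ei := hE.2 i; rewrite iM in Ei.
have : 0 < A i.
  rewrite Ai (bigD1 j) //=.
  by have -> : [forall k, i k \in S j] by apply/forallP.
by rewrite Ei; case: (E M).
Qed.

Lemma sumrN k (F : 'I_k -> nat) : (\sum_x F x)%R = (\sum_x F x)%N.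
Proof. by apply: (big_rec2 (fun y1 y2 : nat => y1 = y2)) => // x y1 y2 _ ->. Qed.

Lemma step23 (m n : nat) (hm : 2 <= m) (hn : 1 <= n)
  (A : tensor m n) (E : pred (mset n)) (hE : is_assoc_tensor E A) :
  (exists P : {set {set 'I_n}}, partition P [set: 'I_n] /\
     forall M : mset n,
       E M <-> (mcard M = m /\
                exists2 V, V \in P & forall x, 0 < M x -> x \in V)) ->
   exists q : nat, 0 < q /\
   exists u : 'I_q -> 'I_n -> nat,
     (forall j x, u j x = 0 \/ u j x = 1) /\
     (forall i, A i = \sum_(j < q) tpow m (u j) i) /\
     exists nn : 'I_q -> nat,
       (forall j, 0 < nn j) /\ \sum_(j < q) nn j = n /\
       ((colmx u)^T *m colmx u)%R = diagn nn.
Proof.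
case=> P [pP HE].
have k0 : 'I_m := Ordinal (leq_trans (isT : 0 < 2) hm).
have x0 : 'I_n := Ordinal hn.
move: (pP) => /and3P[/eqP cov triv nz].
have [V0 V0P _] : exists2 V, V \in P & x0 \in V.
  by apply/bigcupP; rewrite -/(cover P) cov inE.
exists #|P|; split; first by apply/card_gt0P; exists V0.
pose V := fun j : 'I_#|P| => enum_val j.
have VP : forall j, V j \in P by move=> j; apply: enum_valP.
have Vinj : forall a b, V a = V b -> a = b by move=> a b; apply: enum_val_inj.
exists (fun j x => nat_of_bool (x \in V j)); split.
  by move=> j x; case: (_ \in _); [right|left].
split.
  move=> i; rewrite hE.2.
  rewrite (eq_bigr (fun j => nat_of_bool [forall k, i k \in V j])); last first.
    move=> j _; rewrite tpow01; last by move=> x; case: (_ \in _); [right|left].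
    by congr nat_of_bool; apply: eq_forallb => k; case: (_ \in _).
  rewrite sumb_uniq; last first.
    move=> a b /forallP Ha /forallP Hb; apply: Vinj; apply/eqP.
    apply/negPn/negP => neq.
    move: (trivIsetP triv _ _ (VP a) (VP b) neq).
    rewrite -setI_eq0 => /eqP/setP/(_ (i k0)).
    by rewrite in_setI in_set0 Ha Hb.
  have -> : E (mset_of i) = [exists j, [forall k, i k \in V j]].
    apply/idP/idP.
      case/HE => _ [W WP HW]; apply/existsP; exists (enum_rank_in WP W).
      rewrite /V enum_rankK_in //; apply/forallP => k; apply: HW.
      by apply/mset_of_pos; exists k.
    case/existsP => j /forallP Hj; apply/HE; split; first exact: mcard_mset_of.
    by exists (V j) => // x /mset_of_pos [k <-].
  by case: [exists _, _].
exists (fun j => #|V j|); split.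
  move=> j; rewrite card_gt0; apply/negP => /eqP e.
  by move: (VP j); rewrite e (negbTE nz).
split.
  by rewrite /V -(big_enum_val (fun B : {set _} => #|B|)) -(card_partition pP) cardsT card_ord.
apply/matrixP => a b; rewrite !mxE.
rewrite /colmx.
transitivity (\sum_x (nat_of_bool (x \in V a) * nat_of_bool (x \in V b)))%N.
  etransitivity; first exact: sumrN.
  under eq_bigr => x _ do rewrite /= !mxE.
  by apply: eq_bigr.
case: (eqVneq a b) => [<-|neq].
  transitivity #|V a|; last by [].
  rewrite -sum1_card [RHS]big_mkcond /=; apply: eq_bigr => x _.
  by case: (x \in V a).
rewrite big1 // => x _.
move: (trivIsetP triv _ _ (VP a) (VP b)).
have -> : V a != V b by apply/negP => /eqP /Vinj /eqP; rewrite (negbTE neq).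
move=> /(_ isT); rewrite -setI_eq0 => /eqP/setP/(_ x).
by rewrite in_setI in_set0; case: (x \in V a); case: (x \in V b).
Qed.

Theorem mainTheorem4 (m n : nat) (hm : 2 <= m) (hn : 1 <= n)
  (A : tensor m n) (hA : in_SF A) (hnz : ~ has_zero_block A)
  (E : pred (mset n)) (hE : is_assoc_tensor E A) :
  (is01cp A <->
   exists P : {set {set 'I_n}}, partition P [set: 'I_n] /\
     forall M : mset n,
       E M <-> (mcard M = m /\
                exists2 V, V \in P & forall x, 0 < M x -> x \in V)) /\
  (is01cp A <->
   exists q : nat, 0 < q /\
   exists u : 'I_q -> 'I_n -> nat,
     (forall j x, u j x = 0 \/ u j x = 1) /\
     (forall i, A i = \sum_(j < q) tpow m (u j) i) /\
     exists nn : 'I_q -> nat,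
       (forall j, 0 < nn j) /\ \sum_(j < q) nn j = n /\
       ((colmx u)^T *m colmx u)%R = diagn nn).
Proof.
have h31 : (exists q : nat, 0 < q /\
   exists u : 'I_q -> 'I_n -> nat,
     (forall j x, u j x = 0 \/ u j x = 1) /\
     (forall i, A i = \sum_(j < q) tpow m (u j) i) /\
     exists nn : 'I_q -> nat,
       (forall j, 0 < nn j) /\ \sum_(j < q) nn j = n /\
       ((colmx u)^T *m colmx u)%R = diagn nn) -> is01cp A.
  by case=> q [q0 [u [u01 [Au _]]]]; exists q; split => //; exists u.
have h12 := @step12 m n hm hn A hA hnz E hE.
have h23 := @step23 m n hm hn A E hE.
split; split => //.
- by move=> H; apply: h31; apply: h23.
- by move=> H; apply: h23; apply: h12.
Qed.
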